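(* Let $n\geq 4$ and let $\gamma: WT_n\to\mathrm{GL}_{n+1}(\mathbb{C})$ be a homogeneous $3$-local representation of the welded twin group $WT_n$. Then $\gamma$ is reducible.
   Context: The virtual twin group $VT_n$ ($n\geq 2$) has generators $s_1,\dots,s_{n-1},\rho_1,\dots,\rho_{n-1}$ and defining relations: $s_i^2=1$ ($1\le i\le n-1$); $s_is_j=s_js_i$ ($|i-j|\ge2$); $\rho_i\rho_{i+1}\rho_i=\rho_{i+1}\rho_i\rho_{i+1}$ ($1\le i\le n-2$); $\rho_i\rho_j=\rho_j\rho_i$ ($|i-j|\ge2$); $\rho_i^2=1$; $s_i\rho_j=\rho_js_i$ ($|i-j|\ge2$); $\rho_i\rho_{i+1}s_i=s_{i+1}\rho_i\rho_{i+1}$ ($1\le i\le n-2$). The welded twin group $WT_n$ is the quotient of $VT_n$ by the additional relations $\rho_is_{i+1}s_i=s_{i+1}s_i\rho_{i+1}$ ($1\le i\le n-2$). A representation $\gamma:WT_n\to\mathrm{GL}_{n+1}(\mathbb{C})$ is homogeneous $3$-local if there are fixed $M,N\in\mathrm{GL}_3(\mathbb{C})$ with $\gamma(s_i)=\mathrm{diag}(I_{i-1},M,I_{n-i-1})$ and $\gamma(\rho_i)=\mathrm{diag}(I_{i-1},N,I_{n-i-1})$ for all $i$ (block-diagonal, $I_r$ the $r\times r$ identity). Reducible means there is a subspace $0\neq U\neq\mathbb{C}^{n+1}$ invariant under all $\gamma(g)$. *)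

(* Defs.v *)
From HB Require Import structures.
From mathcomp Require Import all_boot all_order all_algebra.
From mathcomp Require Import complex Rstruct.
From Stdlib Require Rdefinitions.
Set Implicit Arguments. Unset Strict Implicit. Unset Printing Implicit Defensive.
Import Order.TTheory GRing.Theory Num.Theory.
Local Open Scope ring_scope.

Definition CC : numClosedFieldType := Rdefinitions.R[i].

(* [local_mx n i M] = diag(I_{i-1}, M, I_{n-i-1}) in GL_{n+1}, for 1 <= i <= n-1:
   the 3x3 block M sits in rows/columns i-1, i, i+1 (0-based indices). *)
Definition local_mx (n i : nat) (M : 'M[CC]_3) : 'M[CC]_(n.+1) :=
  \matrix_(r < n.+1, c < n.+1)
    if [&& (i.-1 <= r)%N, (r < i.+2)%N, (i.-1 <= c)%N & (c < i.+2)%N]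
    then M (inord (r - i.-1)) (inord (c - i.-1))
    else (r == c)%:R.

(* The defining relations of WT_n hold for the images
   s_i |-> local_mx n i M, rho_i |-> local_mx n i N  (indices 1 <= i <= n-1). *)
Definition WT_relations (n : nat) (M N : 'M[CC]_3) : Prop :=
  let S i := local_mx n i M in
  let P i := local_mx n i N in
  (forall i, (1 <= i <= n.-1)%N -> S i *m S i = 1%:M) /\
  (forall i j, (1 <= i <= n.-1)%N -> (1 <= j <= n.-1)%N -> (i.+2 <= j)%N \/ (j.+2 <= i)%N ->
     S i *m S j = S j *m S i) /\
  (forall i, (1 <= i <= n.-2)%N -> P i *m P i.+1 *m P i = P i.+1 *m P i *m P i.+1) /\
  (forall i j, (1 <= i <= n.-1)%N -> (1 <= j <= n.-1)%N -> (i.+2 <= j)%N \/ (j.+2 <= i)%N ->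
     P i *m P j = P j *m P i) /\
  (forall i, (1 <= i <= n.-1)%N -> P i *m P i = 1%:M) /\
  (forall i j, (1 <= i <= n.-1)%N -> (1 <= j <= n.-1)%N -> (i.+2 <= j)%N \/ (j.+2 <= i)%N ->
     S i *m P j = P j *m S i) /\
  (forall i, (1 <= i <= n.-2)%N -> P i *m P i.+1 *m S i = S i.+1 *m P i *m P i.+1) /\
  (forall i, (1 <= i <= n.-2)%N -> P i *m S i.+1 *m S i = S i.+1 *m S i *m P i.+1).

Definition homogeneous_3_local_WT (n : nat) (M N : 'M[CC]_3) : Prop :=
  M \in unitmx /\ N \in unitmx /\ WT_relations n M N.

(* A subspace W of C^{n+1} (column vectors) is encoded by a matrix U whose rows
   are the transposes of vectors spanning W.  W is invariant under A
   (i.e. x in W -> A x in W) iff (U *m A^T <= U)%MS, since (A x)^T = x^T A^T. *)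
Definition invariant_subspace (m : nat) (A : 'M[CC]_m) (U : 'M[CC]_m) : bool :=
  (U *m A^T <= U)%MS.

(* The representation is reducible: some subspace 0 <> W <> C^{n+1} is invariant
   under every gamma(g); since WT_n is generated by the s_i, rho_i (and an
   invariant subspace of an invertible matrix in finite dimension is invariant
   under its inverse), it suffices to ask invariance under the generators. *)
Definition reducible_local (n : nat) (M N : 'M[CC]_3) : Prop :=
  exists U : 'M[CC]_(n.+1),
    (0 < \rank U < n.+1)%N /\
    forall i, (1 <= i <= n.-1)%N ->
      invariant_subspace (local_mx n i M) U /\ invariant_subspace (local_mx n i N) U.

(* Main.v *)
Require Import Defs.
From mathcomp Require Import all_boot all_order all_algebra zify.
Set Implicit Arguments. Unset Strict Implicit. Unset Printing Implicit Defensive.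
Import Order.TTheory GRing.Theory Num.Theory.
Local Open Scope ring_scope.

Lemma mulE n (A B : 'M[CC]_n) i j : (A *m B) i j = \sum_k A i k * B k j.
Proof. by rewrite mxE. Qed.

Ltac crunch := repeat (case: ifP => ? ); repeat (case: eqP => ?); try lia; rewrite /= ?mul0r ?mulr0 ?addr0 ?add0r //.

Lemma comm_entry n (X Y : 'M[CC]_3) (r k : nat) : (4 <= n)%N -> (r < 2)%N -> (k < 2)%N ->
  local_mx n 1 X *m local_mx n 3 Y = local_mx n 3 Y *m local_mx n 1 X ->
  X (inord r) (inord 2) * Y 0 (inord k.+1) = 0.
Proof.
move=> n4 r2 k2 H.
have := congr1 (fun A : 'M_(n.+1) => A (inord r) (inord (k + 3))) H.
rewrite /= !mulE.
rewrite (bigD1 (inord 2 : 'I_n.+1)) // [Z in _ = Z](bigD1 (inord r : 'I_n.+1)) //=.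
have h1 : (\sum_(i < n.+1 | i != inord 2) local_mx n 1 X (inord r) i * local_mx n 3 Y i (inord (k + 3))) = 0.
  apply: big1 => -[j hj] /eqP jr.
  have {}jr : j <> 2%N by move=> e; apply: jr; apply: val_inj; rewrite /= inordK //; lia.
  rewrite !mxE -!val_eqE /= !inordK; try lia.
  crunch.
rewrite h1.
have h2 : (\sum_(i < n.+1 | i != inord r) local_mx n 3 Y (inord r) i * local_mx n 1 X i (inord (k + 3))) = 0.
  apply: big1 => -[j hj] /eqP jr.
  have {}jr : j <> r by move=> e; apply: jr; apply: val_inj; rewrite /= inordK //; lia.
  rewrite !mxE -!val_eqE /= !inordK; try lia.
  crunch.
rewrite h2 !mxE -!val_eqE /= !inordK; try lia.
crunch.
have -> : (k + 3 - 2 = k.+1)%N by lia.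
have -> : (inord 0 : 'I_3) = 0 by apply: val_inj; rewrite /= inordK.
by rewrite !subn0.
Qed.
Lemma sum_single n (F : 'I_n -> CC) j : (forall k, k != j -> F k = 0) -> \sum_k F k = F j.
Proof.
move=> h; rewrite (bigD1 j) //=.
have h1 : \sum_(k < n | k != j) F k = 0 by apply: big1.
by rewrite h1 addr0.
Qed.

Lemma mul_delta_r n (B : 'M[CC]_n) (j k a b : 'I_n) :
  (B *m delta_mx j k) a b = B a j * (k == b)%:R.
Proof.
rewrite mulE (sum_single (j:=j)); first by rewrite mxE eqxx eq_sym.
by move=> l /negbTE lj; rewrite mxE lj mulr0.
Qed.

Lemma mul_delta_l n (B : 'M[CC]_n) (i j a b : 'I_n) :
  (delta_mx i j *m B) a b = (a == i)%:R * B j b.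
Proof.
rewrite mulE (sum_single (j:=j)); first by rewrite mxE eqxx andbT.
by move=> l /negbTE lj; rewrite mxE eq_sym lj andbF mul0r.
Qed.

Lemma inv_H0 n (A : 'M[CC]_n.+1) :
  (forall c : 'I_n.+1, c != ord0 -> A ord0 c = 0) ->
  invariant_subspace A (1%:M - delta_mx ord0 ord0).
Proof.
move=> hA; rewrite /invariant_subspace.
set U := 1%:M - _.
have -> : U *m A^T = U *m A^T *m U.
  rewrite {3}/U mulmxBr mulmx1.
  suff -> : U *m A^T *m delta_mx (ord0 : 'I_n.+1) (ord0 : 'I_n.+1) = 0 by rewrite subr0.
  apply/matrixP => a b; rewrite mul_delta_r mulE (sum_single (j:=a)).
    rewrite !mxE eqxx.
    have [->|ha] := eqVneq a ord0; first by rewrite /= subrr !mul0r.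
    by rewrite hA // !mulr0 mul0r.
  move=> k hk; have hak : (a == k) = false by rewrite eq_sym; exact: negbTE.
  rewrite !mxE hak.
  case: eqP => [ea|ha] /=; last by rewrite subr0 mul0r.
  case: eqP => [ek|hk0] /=; last by rewrite subr0 mul0r.
  by move: hk; rewrite ea ek eqxx.
exact: submxMl.
Qed.

Lemma inv_top n (A : 'M[CC]_n.+1) :
  (forall c : 'I_n.+1, c != ord_max -> A c ord_max = 0) ->
  invariant_subspace A (delta_mx ord_max ord_max).
Proof.
move=> hA; rewrite /invariant_subspace.
have -> : delta_mx (ord_max : 'I_n.+1) (ord_max : 'I_n.+1) *m A^T = A ord_max ord_max *: delta_mx (ord_max : 'I_n.+1) (ord_max : 'I_n.+1).
  apply/matrixP => a b; rewrite mul_delta_l !mxE.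
  have [->|hb] := eqVneq b ord_max; first by rewrite andbT mulrC.
  by rewrite andbF hA // !mulr0.
exact: scalemx_sub.
Qed.

Lemma rank_H0 n : (0 < n)%N -> (0 < \rank (1%:M - delta_mx (ord0 : 'I_n.+1) (ord0 : 'I_n.+1) : 'M[CC]_n.+1)%R < n.+1)%N.
Proof.
move=> n0; set U := 1%:M - _.
have DU : delta_mx (ord0 : 'I_n.+1) ord0 *m U = 0.
  by rewrite /U mulmxBr mulmx1 mul_delta_mx subrr.
apply/andP; split.
  rewrite lt0n mxrank_eq0; apply/eqP => U0.
  have := congr1 (fun B : 'M_(n.+1) => B ord_max ord_max) U0.
  rewrite !mxE /= eqxx /=.
  have -> : (ord_max == ord0 :> 'I_n.+1) = false by rewrite -val_eqE /=; lia.
  rewrite /= subr0 => h; have h' : (1 : CC) = 0 := h; by move: (@oner_neq0 CC); rewrite h' eqxx.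
rewrite ltn_neqAle rank_leq_col andbT; apply/negP => /eqP r.
have : U \in unitmx by rewrite -row_full_unit /row_full r.
move=> Uu.
have := congr1 (fun B => B *m invmx U) DU.
rewrite mulmxK // mul0mx => /matrixP /(_ ord0 ord0).
rewrite !mxE eqxx /= => h; have h' : (1 : CC) = 0 := h; by move: (@oner_neq0 CC); rewrite h' eqxx.
Qed.

Lemma col_last n i (X : 'M[CC]_3) : (4 <= n)%N -> (1 <= i <= n.-1)%N ->
  (forall r, (r < 2)%N -> X (inord r) (inord 2) = 0) ->
  forall c : 'I_n.+1, c != ord_max -> local_mx n i X c ord_max = 0.
Proof.
move=> n4 hi hX c hc.
have hc' : (c : nat) != n by move: hc; rewrite -val_eqE.
rewrite mxE /=; case: ifP => h.
  have e1 : (n - i.-1 = 2)%N by lia.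
  rewrite e1; apply: hX; lia.
by rewrite (negbTE hc).
Qed.

Lemma row_first n i (X : 'M[CC]_3) : (1 <= i)%N ->
  (forall k, (k < 2)%N -> X 0 (inord k.+1) = 0) ->
  forall c : 'I_n.+1, c != ord0 -> local_mx n i X ord0 c = 0.
Proof.
move=> hi hX c hc.
have hc' : (c : nat) != 0%N by move: hc; rewrite -val_eqE.
rewrite mxE /=; case: ifP => h.
  have e1 : (i.-1 = 0)%N by lia.
  have e2 : (c - i.-1 = (c.-1).+1)%N by lia.
  rewrite e2 e1 sub0n.
  have -> : (inord 0 : 'I_3) = 0 by apply: val_inj; rewrite /= inordK.
  apply: hX; lia.
by rewrite eq_sym (negbTE hc).
Qed.

Theorem theorem4p4 (n : nat) (M N : 'M[CC]_3) :
  (4 <= n)%N -> homogeneous_3_local_WT n M N -> reducible_local n M N.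
Proof.
move=> n4 [_ [_ HW]].
move: HW; rewrite /WT_relations /=.
move=> [HS2 [HSc [HPb [HPc [HP2 [HSPc [Hm Hw]]]]]]].
have i1 : (1 <= 1 <= n.-1)%N by lia.
have i3 : (1 <= 3 <= n.-1)%N by lia.
have i13 : (1.+2 <= 3)%N \/ (3.+2 <= 1)%N by left.
have i31 : (3.+2 <= 1)%N \/ (1.+2 <= 3)%N by right.
have C : forall X Y, (X = M \/ X = N) -> (Y = M \/ Y = N) ->
    local_mx n 1 X *m local_mx n 3 Y = local_mx n 3 Y *m local_mx n 1 X.
  move=> X Y [->|->] [->|->].
  - exact: HSc.
  - exact: HSPc.
  - exact: (esym (HSPc 3 1 i3 i1 i31)).
  - exact: HPc.
case: (boolP [&& M (inord 0) (inord 2) == 0, M (inord 1) (inord 2) == 0,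
   N (inord 0) (inord 2) == 0 & N (inord 1) (inord 2) == 0]).
  move/and4P => [/eqP a /eqP b /eqP c /eqP d].
  exists (delta_mx ord_max ord_max); split.
    rewrite mxrank_delta; lia.
  have hr : forall X : 'M[CC]_3, X (inord 0) (inord 2) = 0 -> X (inord 1) (inord 2) = 0 ->
      forall r, (r < 2)%N -> X (inord r) (inord 2) = 0.
    by move=> X h0 h1 [|[|r]] hr'.
  move=> i hi; split; apply: inv_top; apply: col_last => //; exact: hr.
move=> hneg.
have [X0 [r0 [hX [hr hne]]]] : exists X0 r0, (X0 = M \/ X0 = N) /\ (r0 < 2)%N /\
    X0 (inord r0) (inord 2) != 0.
  case: (eqVneq (M (inord 0) (inord 2)) 0) => [e1|ne]; last by exists M, 0%N; auto.
  case: (eqVneq (M (inord 1) (inord 2)) 0) => [e2|ne]; last by exists M, 1%N; auto.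
  case: (eqVneq (N (inord 0) (inord 2)) 0) => [e3|ne]; last by exists N, 0%N; auto.
  case: (eqVneq (N (inord 1) (inord 2)) 0) => [e4|ne]; last by exists N, 1%N; auto.
  by move: hneg; rewrite e1 e2 e3 e4 eqxx.
have hY : forall Y, (Y = M \/ Y = N) -> forall k, (k < 2)%N -> Y 0 (inord k.+1) = 0.
  move=> Y hYMN k hk.
  have := comm_entry n4 hr hk (C X0 Y hX hYMN).
  move=> e; apply/eqP; move: e => /eqP; rewrite mulf_eq0 (negbTE hne) //.
exists (1%:M - delta_mx ord0 ord0); split.
  apply: rank_H0; lia.
move=> i hi; split; apply: inv_H0; apply: row_first; try lia; apply: hY; auto.
Qed.
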